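(* Assume the Nested Logit model with outside option described in the context satisfies Assumptions 1 and 2, and suppose the true choice probabilities $\phi(i,S)$ are known for all $S \in \mathcal{S} \cup \{[n]\}$ and all $i \in S \cup \{0\}$ (so all boost factors $\mathsf{BF}(i,S)$, $S\in\mathcal S$, $i\in S\cup\{0\}$, are known exactly). Then the matrix $E$ returned by Algorithm 1 (described in the context) satisfies $E[i,j] = \mathbf{1}(N(i) = N(j))$ for all $i \neq j$ in $[n]$.
   Context: Items: $[n]=\{1,\dots,n\}$ with $n\ge 2$. Experiment design: fix an integer base $b \ge 2$, let $L = \lceil \log_b n \rceil$, and fix an injective map $\sigma: [n] \to \{0,\dots,b-1\}^L$, writing $\sigma_\ell(i)$ for its $\ell$-th coordinate. For $\ell \in \{1,\dots,L\}$ and $d \in \{0,\dots,b-1\}$ let $S_{\ell,-d} = \{i \in [n] : \sigma_\ell(i) \neq d\}$, and let $\mathcal{S} = \{S_{\ell,-d}\}_{\ell,d}$; the control assortment $[n]$ is also offered. Nested Logit model with outside option: $\mathcal{N}$ is a partition of $[n]$ into nonempty disjoint nests; $N(i)$ denotes the nest containing $i$. Each item has a weight $v_i > 0$, each nest $N$ a parameter $\lambda_N \in [0,1]$, and each nest with $\lambda_N = 0$ an additional weight $v_N > 0$. For $S \subseteq [n]$ set $v_N(S) = (\sum_{i \in N \cap S} v_i)^{\lambda_N}$ if $\lambda_N \in (0,1]$ and $v_N(S) = v_N \mathbf{1}(N \cap S \neq \emptyset)$ if $\lambda_N = 0$. For $i \in S$, $\phi(i,S) = \frac{v_{N(i)}(S)}{1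 + \sum_{N \in \mathcal{N}} v_N(S)} \cdot \frac{v_i}{\sum_{j \in N(i) \cap S} v_j}$, and $\phi(0,S) = \frac{1}{1 + \sum_{N \in \mathcal{N}} v_N(S)}$. Boost factor: $\mathsf{BF}(i,S) = \phi(i,S)/\phi(i,[n])$ for $S \in \mathcal{S}$, $i \in S \cup \{0\}$. Multiplier: $\mathsf{Mult}(N,S) = \left(\frac{\sum_{j \in N} v_j}{\sum_{j \in N \cap S} v_j}\right)^{1-\lambda_N}$. Assumption 1: $\lambda_N = 1$ iff $|N| = 1$. Assumption 2: for every $S \in \mathcal{S}$ and distinct nests $N \neq N'$ with $\emptyset \neq N \cap S \neq N$ and $\emptyset \neq N' \cap S \neq N'$, $\mathsf{Mult}(N,S) \neq \mathsf{Mult}(N',S)$. Algorithm 1 maintains a symmetric matrix $E$ with entries $E[i,j] \in \{0,1,\text{null}\}$ for $i \neq j$ (every assignment to $E[i,j]$ is also made to $E[j,i]$), initially all null. (1) For each $S \in \mathcal{S}$ (in any order): for each pair of distinct $i,j \in S$, if $\mathsf{BF}(i,S) \neq \mathsf{BF}(j,S)$ set $E[i,j] \gets 0$; else if $\mathsf{BF}(i,S) = \mathsf{BF}(j,S) > \mathsf{BF}(0,S)$ set $E[i,j] \gets 1$. Then, with $\mathrm{NoBoost} = \{i \in S : \mathsf{BF}(i,S) = \mathsf{BF}(0,S)\}$, set $E[i,k] \gets 0$ for all $i \in \mathrm{NoBoost}$ and all $k \notin S$. (2) One-hop transitivity: compute the set of pairs $(i,j)$ with $E[i,j] = \text{null}$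 for which some $k \notin \{i,j\}$ has $E[i,k] = E[j,k] = 1$, and set $E[i,j] \gets 1$ for all such pairs. (3) Identify missing pairs: compute the set of pairs $(i,j)$ with $E[i,j] = \text{null}$ such that $E[i,k] \neq 1$ and $E[j,k] \neq 1$ for all $k \notin \{i,j\}$, and set $E[i,j] \gets 1$ for all such pairs. (4) Set every remaining null entry to $0$ and return $E$. *)

(* Defs.v *)
From HB Require Import structures.
From mathcomp Require Import all_boot all_order all_algebra.
From mathcomp Require Import reals exp.
Set Implicit Arguments. Unset Strict Implicit. Unset Printing Implicit Defensive.
Import Order.TTheory GRing.Theory Num.Theory.
Local Open Scope ring_scope.

(* Items are 'I_n (0-based); coordinates l range over 'I_L with L = up_log b n
   = ceil(log_b n); sigma : 'I_n -> {ffun 'I_L -> 'I_b}. *)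
Definition S_minus (n b : nat) (sigma : 'I_n -> {ffun 'I_(up_log b n) -> 'I_b})
  (l : 'I_(up_log b n)) (d : 'I_b) : {set 'I_n} :=
  [set i | sigma i l != d].

Definition Sfam (n b : nat) (sigma : 'I_n -> {ffun 'I_(up_log b n) -> 'I_b})
  : {set {set 'I_n}} :=
  [set S_minus sigma l d | l : 'I_(up_log b n), d : 'I_b].

Section NL.
Variables (R : realType) (n : nat) (P : {set {set 'I_n}}) (v : 'I_n -> R)
  (lam vN : {set 'I_n} -> R).

Definition wsum (A : {set 'I_n}) : R := \sum_(i in A) v i.

Definition nestw (N S : {set 'I_n}) : R :=
  if lam N == 0 then (if N :&: S != set0 then vN N else 0)
  else (wsum (N :&: S)) `^ (lam N).

Definition denom (S : {set 'I_n}) : R := 1 + \sum_(N in P) nestw N S.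

Definition nest (i : 'I_n) : {set 'I_n} := pblock P i.

Definition phi (i : 'I_n) (S : {set 'I_n}) : R :=
  nestw (nest i) S / denom S * (v i / wsum (nest i :&: S)).

Definition phi0 (S : {set 'I_n}) : R := 1 / denom S.

Definition BF (i : 'I_n) (S : {set 'I_n}) : R := phi i S / phi i [set: 'I_n].
Definition BF0 (S : {set 'I_n}) : R := phi0 S / phi0 [set: 'I_n].

Definition Mult (N S : {set 'I_n}) : R :=
  (wsum N / wsum (N :&: S)) `^ (1 - lam N).
End NL.

(* Matrix entries: None = null, Some false = 0, Some true = 1. *)
Section Alg.
Variables (R : realType) (n : nat) (BFi : 'I_n -> {set 'I_n} -> R)
  (BFo : {set 'I_n} -> R).

Definition mat := 'I_n -> 'I_n -> option bool.

Definition E_init : mat := fun _ _ => None.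

(* The pair updates inside S
   touch each unordered pair once and are independent of the order; the
   NoBoost updates touch pairs (i,k), i in S, k not in S, disjoint from them. *)
Definition step1 (E : mat) (S : {set 'I_n}) : mat := fun i j =>
  if [&& i \in S, j \in S & i != j] then
    if BFi i S != BFi j S then Some false
    else if BFo S < BFi i S then Some true
    else E i j
  else if [&& i \in S, BFi i S == BFo S & j \notin S]
       || [&& j \in S, BFi j S == BFo S & i \notin S] then Some false
  else E i j.

(* step (2): one-hop transitivity, computed simultaneously *)
Definition step2 (E : mat) : mat := fun i j =>
  if [&& E i j == None, i != j &
        [exists k, [&& k != i, k != j, E i k == Some true & E j k == Some true]]]
  then Some true else E i j.

(* step (3): missing pairs, computed simultaneously *)
Definition step3 (E : mat) : mat := fun i j =>
  if [&& E i j == None, i != j &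
        [forall k, ((k != i) && (k != j)) ==>
                   ((E i k != Some true) && (E j k != Some true))]]
  then Some true else E i j.

Definition step4 (E : mat) : 'I_n -> 'I_n -> bool := fun i j =>
  if E i j is Some x then x else false.

Definition algorithm1 (s : seq {set 'I_n}) : 'I_n -> 'I_n -> bool :=
  step4 (step3 (step2 (foldl step1 E_init s))).
End Alg.

(* Main.v *)
Require Import Defs.
From HB Require Import structures.
From mathcomp Require Import all_boot all_order all_algebra.
From mathcomp Require Import reals exp.
From mathcomp Require Import ring lra.
Import Order.TTheory GRing.Theory Num.Theory.
Local Open Scope ring_scope.
Set Implicit Arguments. Unset Strict Implicit. Unset Printing Implicit Defensive.

Section Comb.
Variables (R : realType) (n b : nat)
  (sigma : 'I_n -> {ffun 'I_(up_log b n) -> 'I_b})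
  (P : {set {set 'I_n}}) (BFi : 'I_n -> {set 'I_n} -> R) (BFo : {set 'I_n} -> R)
  (s : seq {set 'I_n}).
Hypothesis sigma_inj : injective sigma.
Hypothesis Hpart : partition P [set: 'I_n].
Hypothesis Hs : forall S, (S \in s) = (S \in Sfam sigma).
Hypothesis H1 : forall S i, S \in Sfam sigma -> i \in S ->
  ((BFi i S == BFo S) = (pblock P i \subset S)) /\
  ((BFo S < BFi i S) = ~~ (pblock P i \subset S)).
Hypothesis H2 : forall S i j, S \in Sfam sigma -> i \in S -> j \in S ->
  (BFi i S == BFi j S) =
  (pblock P i == pblock P j) || ((pblock P i \subset S) && (pblock P j \subset S)).

Definition T (i j : 'I_n) := pblock P i == pblock P j.

Definition det (S : {set 'I_n}) (i j : 'I_n) : bool :=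
  if (i \in S) && (j \in S) then
    (if T i j then ~~ (pblock P i \subset S)
     else ~~ ((pblock P i \subset S) && (pblock P j \subset S)))
  else [&& i \in S, pblock P i \subset S & j \notin S]
       || [&& j \in S, pblock P j \subset S & i \notin S].

Lemma cov : cover P = [set: 'I_n].
Proof. by case/and3P: Hpart => /eqP. Qed.
Lemma triv : trivIset P.
Proof. by case/and3P: Hpart. Qed.

Lemma memT i j : T i j = (j \in pblock P i).
Proof. by rewrite /T eq_pblock ?triv // cov inE. Qed.

Lemma mem_self i : i \in pblock P i.
Proof. by rewrite mem_pblock cov inE. Qed.

Lemma T_sym i j : T i j = T j i.
Proof. by rewrite /T eq_sym. Qed.

Lemma T_trans i j k : T i k -> T j k -> T i j.
Proof. by rewrite /T => /eqP -> /eqP ->. Qed.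

Lemma det_sym S i j : det S i j = det S j i.
Proof.
rewrite /det T_sym; case: (i \in S); case: (j \in S) => //=; rewrite ?andbF ?orbF //.
by case: (boolP (T j i)) => [/eqP->|_] //; rewrite andbC.
Qed.

Lemma step1E E S i j : S \in Sfam sigma -> i != j ->
  step1 BFi BFo E S i j = if det S i j then Some (T i j) else E i j.
Proof.
move=> HS ij; rewrite /step1 /det ij.
case: (boolP (i \in S)) => iS; case: (boolP (j \in S)) => jS //=.
- rewrite H2 //; have [Hi1 Hi2] := H1 HS iS.
  rewrite Hi2 /T; case: (pblock P i == pblock P j) => //=.
  by case: (pblock P i \subset S); case: (pblock P j \subset S).
- have [Hi1 _] := H1 HS iS; rewrite Hi1 !andbT orbF.
  case: (boolP (pblock P i \subset S)) => // sub.
  suff -> : T i j = false by [].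
  apply/negP; rewrite memT => jN; by move/subsetP: sub => /(_ _ jN); rewrite (negbTE jS).
- have [Hj1 _] := H1 HS jS; rewrite Hj1 !andbT.
  case: (boolP (pblock P j \subset S)) => // sub.
  suff -> : T i j = false by [].
  apply/negP; rewrite T_sym memT => jN; by move/subsetP: sub => /(_ _ jN); rewrite (negbTE iS).
Qed.

Lemma foldlE (t : seq {set 'I_n}) E i j : i != j -> all (mem (Sfam sigma)) t ->
  foldl (step1 BFi BFo) E t i j =
  if has (fun S => det S i j) t then Some (T i j) else E i j.
Proof.
move=> ij; elim: t E => [|S t IH] E //= /andP [HS Ht].
rewrite IH // step1E //.
by case: (det S i j); case: has.
Qed.

Definition D i j := has (fun S => det S i j) s.

Lemma allS : all (mem (Sfam sigma)) s.
Proof. by apply/allP => S; rewrite Hs. Qed.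

Lemma E1E i j : i != j ->
  foldl (step1 BFi BFo) (@E_init n) s i j = if D i j then Some (T i j) else None.
Proof. by move=> ij; rewrite foldlE // allS. Qed.

Lemma D_sym i j : D i j = D j i.
Proof. by apply: eq_has => S; rewrite det_sym. Qed.

Lemma S_in l d : S_minus sigma l d \in s.
Proof. by rewrite Hs; apply/imset2P; exists l d. Qed.

Lemma DP i j l d : det (S_minus sigma l d) i j -> D i j.
Proof. by move=> H; apply/hasP; exists (S_minus sigma l d); first exact: S_in. Qed.

Lemma nDP i j : ~~ D i j -> forall l d, ~~ det (S_minus sigma l d) i j.
Proof. by move=> /hasPn H l d; apply: H; apply: S_in. Qed.

Lemma inSm x l d : (x \in S_minus sigma l d) = (sigma x l != d).
Proof. by rewrite inE. Qed.

Lemma ex_diff x y : x != y -> exists l, sigma x l != sigma y l.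
Proof.
move=> xy; apply/existsP; apply: contraR xy; rewrite negb_exists => /forallP H.
apply/eqP; apply: sigma_inj; apply/ffunP => l; apply/eqP.
by have := H l; rewrite negbK.
Qed.

Lemma neqC (x y : 'I_n) : x != y -> y != x.
Proof. by rewrite eq_sym. Qed.

Lemma notsub i x (S : {set 'I_n}) : x \in pblock P i -> x \notin S -> ~~ (pblock P i \subset S).
Proof. by move=> xi xS; apply/subsetPn; exists x. Qed.

Lemma detT (S : {set 'I_n}) i j : T i j -> i \in S -> j \in S -> det S i j = ~~ (pblock P i \subset S).
Proof. by move=> Tij iS jS; rewrite /det iS jS Tij. Qed.

Lemma detnT (S : {set 'I_n}) i j : ~~ T i j -> i \in S -> j \in S ->
  det S i j = ~~ ((pblock P i \subset S) && (pblock P j \subset S)).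
Proof. by move=> Tij iS jS; rewrite /det iS jS (negbTE Tij). Qed.

Lemma detio (S : {set 'I_n}) i j : i \in S -> j \notin S -> ~~ det S i j -> ~~ (pblock P i \subset S).
Proof. by move=> iS jS; rewrite /det iS (negbTE jS) /= andbT orbF. Qed.

Lemma L3a i j m : j != m -> T i j -> T i m -> ~~ D i j -> D i m.
Proof.
move=> jm Tij Tim nD.
have [l Hl] := ex_diff (x := m) (y := j) (neqC jm).
have eil : sigma i l = sigma m l.
  apply/eqP; apply: contraNT (nDP nD l (sigma m l)) => H.
  rewrite (detT Tij); [| by rewrite inSm | by rewrite inSm eq_sym].
  by apply: (@notsub _ m); [rewrite -memT | rewrite inSm eqxx].
apply: (@DP _ _ l (sigma j l)).
rewrite (detT Tim); [| by rewrite inSm eil | by rewrite inSm].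
by apply: (@notsub _ j); [rewrite -memT | rewrite inSm eqxx].
Qed.

Lemma L3 i j m : i != m -> j != m -> T i j -> T i m ->
  D i j \/ (D i m /\ D j m).
Proof.
move=> im jm Tij Tim; case: (boolP (D i j)) => Dij; [by left | right].
split; first exact: L3a Tij Tim Dij.
apply: (@L3a j i m) => //; first by rewrite T_sym.
- by apply: (@T_trans _ _ i); rewrite // T_sym.
- by rewrite D_sym.
Qed.

Lemma LA i j : i != j -> ~~ T i j -> ~~ D i j ->
  exists a a', [/\ a != i, a' != i, a != a', T i a & T i a'].
Proof.
move=> ij Tij nD.
have [l0 Hl0] := ex_diff ij.
have := detio (S := S_minus sigma l0 (sigma j l0)) _ _ (nDP nD l0 (sigma j l0)).
rewrite !inSm eqxx => /(_ Hl0 isT) /subsetPn [a aN].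
rewrite inSm negbK => /eqP Ha.
have ai : a != i by apply: contraNneq Hl0 => <-; rewrite Ha.
case: (boolP [exists a', [&& a' \in pblock P i, a' != i & a' != a]]).
  move/existsP => [a' /and3P [a'N a'i a'a]].
  by exists a, a'; rewrite -!memT in aN a'N; split; rewrite // eq_sym.
rewrite negb_exists => /forallP nex.
have aj : a = j.
  apply: sigma_inj; apply/ffunP => l.
  have [eqij|neij] := eqVneq (sigma i l) (sigma j l).
    apply/eqP; apply: contraNT (nDP nD l (sigma a l)) => H.
    rewrite (detnT Tij); [| by rewrite inSm eq_sym eqij | by rewrite inSm eq_sym].
    by rewrite negb_and (@notsub _ a) // inSm eqxx.
  have := detio (S := S_minus sigma l (sigma j l)) _ _ (nDP nD l (sigma j l)).
  rewrite !inSm eqxx => /(_ neij isT) /subsetPn [x xN].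
  rewrite inSm negbK => /eqP Hx.
  have := nex x; rewrite xN /= negb_and !negbK => /orP [/eqP xi | /eqP xa].
    by move: neij; rewrite -xi Hx eqxx.
  by rewrite -xa.
by move: Tij; rewrite memT -aj aN.
Qed.

Lemma step2_keep (E : mat n) x y : E x y != None -> step2 E x y = E x y.
Proof. by rewrite /step2; case: (E x y). Qed.

Lemma step3_keep (E : mat n) x y : E x y != None -> step3 E x y = E x y.
Proof. by rewrite /step3; case: (E x y). Qed.

Lemma main i j : i != j ->
  step4 (step3 (step2 (foldl (step1 BFi BFo) (@E_init n) s))) i j = T i j.
Proof.
move=> ij.
set E1 := foldl _ _ s.
have E1E' x y : x != y -> E1 x y = if D x y then Some (T x y) else None by exact: E1E.
have E1t x y : x != y -> E1 x y = Some true -> D x y /\ T x y.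
  by move=> xy; rewrite E1E' //; case: (D x y) => // [[->]].
have F1 x y : x != y -> step2 E1 x y = Some true -> T x y.
  move=> xy; rewrite /step2; case: ifP.
    move=> /and3P [_ _ /existsP [k /and4P [kx ky /eqP Hk1 /eqP Hk2]]] _.
    have [_ Txk] := E1t _ _ (neqC kx) Hk1.
    have [_ Tyk] := E1t _ _ (neqC ky) Hk2.
    exact: T_trans Txk Tyk.
  by move=> _ /(E1t _ _ xy) [].
case: (boolP (D i j)) => Dij.
  have H : step2 E1 i j = Some (T i j) by rewrite step2_keep E1E' ?Dij.
  by rewrite /step4 step3_keep H.
have E1n : E1 i j = None by rewrite E1E' // (negbTE Dij).
case: (boolP (T i j)) => Tij.
  case: (boolP [exists k, [&& k != i, k != j, D i k, T i k, D j k & T j k]]).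
    move/existsP => [k /and5P [ki kj Dik Tik /andP [Djk Tjk]]].
    have H : step2 E1 i j = Some true.
      rewrite /step2 E1n ij /=; rewrite ifT //; apply/existsP; exists k.
      by rewrite ki kj !E1E' 1?eq_sym // Dik Tik Djk Tjk.
    by rewrite /step4 step3_keep H.
  rewrite negb_exists => /forallP nex.
  have E2n : step2 E1 i j = None.
    rewrite /step2 E1n ij /=; case: ifP => //.
    move=> /existsP [k /and4P [ki kj /eqP Hk1 /eqP Hk2]].
    have [Dik Tik] := E1t _ _ (neqC ki) Hk1.
    have [Djk Tjk] := E1t _ _ (neqC kj) Hk2.
    by move: (nex k); rewrite ki kj Dik Tik Djk Tjk.
  rewrite /step4 /step3 E2n ij /= ifT //.
  apply/forallP => k; apply/implyP => /andP [ki kj].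
  apply/andP; split; apply/negP => /eqP H.
    have Tik := F1 _ _ (neqC ki) H.
    have [|[Dik Djk]] := L3 (neqC ki) (neqC kj) Tij Tik; first by rewrite (negbTE Dij).
    have Tjk : T j k by rewrite /T -(eqP Tij) -(eqP Tik).
    by move: (nex k); rewrite ki kj Dik Tik Djk Tjk.
  have Tjk := F1 _ _ (neqC kj) H.
  have Tji : T j i by rewrite T_sym.
  have [|[Djk Dik]] := L3 (neqC kj) (neqC ki) Tji Tjk; first by rewrite D_sym (negbTE Dij).
  have Tik : T i k by rewrite /T (eqP Tij); exact: Tjk.
  by move: (nex k); rewrite ki kj Dik Tik Djk Tjk.
have E2n : step2 E1 i j = None.
  rewrite /step2 E1n ij /=; case: ifP => //.
  move=> /existsP [k /and4P [ki kj /eqP Hk1 /eqP Hk2]].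
  have [_ Tik] := E1t _ _ (neqC ki) Hk1.
  have [_ Tjk] := E1t _ _ (neqC kj) Hk2.
  by move: Tij; rewrite (T_trans Tik Tjk).
have [a [a' [ai a'i aa' Tia Tia']]] := LA ij Tij Dij.
have [k [ki Tik Dik]] : exists k, [/\ k != i, T i k & D i k].
  have [Dia|[Dia' _]] := L3 (i := i) (j := a) (m := a') (neqC a'i) aa' Tia Tia'.
    by exists a.
  by exists a'.
have kj : k != j by apply: contraNneq Tij => <-.
have E2k : step2 E1 i k = Some true by rewrite step2_keep E1E' 1?eq_sym // Dik Tik.
rewrite /step4 /step3 E2n ij /= ifF ?(negbTE Tij) //.
apply/negbTE; rewrite negb_forall; apply/existsP; exists k.
by rewrite ki kj E2k.
Qed.
End Comb.

Section NLp.
Variables (R : realType) (n : nat) (P : {set {set 'I_n}}) (v : 'I_n -> R)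
  (lam vN : {set 'I_n} -> R).
Hypothesis Hpart : partition P [set: 'I_n].
Hypothesis vpos : forall i, 0 < v i.
Hypothesis lamr : forall N, N \in P -> 0 <= lam N <= 1.
Hypothesis vNpos : forall N, N \in P -> lam N = 0 -> 0 < vN N.
Hypothesis A1 : forall N, N \in P -> (lam N = 1 <-> #|N| = 1%N).

Lemma cov' : cover P = [set: 'I_n].
Proof. by case/and3P: Hpart => /eqP. Qed.

Lemma mem_self' i : i \in pblock P i.
Proof. by rewrite mem_pblock cov' inE. Qed.

Lemma pbP i : pblock P i \in P.
Proof. by apply: pblock_mem; rewrite cov' inE. Qed.

Lemma wsum_ge0 (A : {set 'I_n}) : 0 <= wsum v A.
Proof. by apply: sumr_ge0 => x _; apply: ltW. Qed.

Lemma wsum_gt0 (A : {set 'I_n}) x : x \in A -> 0 < wsum v A.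
Proof.
move=> xA; rewrite /wsum (bigD1 x) //=.
have := vpos x; have : 0 <= \sum_(i in A | i != x) v i by apply: sumr_ge0 => y _; apply: ltW.
lra.
Qed.

Lemma nestw_ge0 N S : N \in P -> 0 <= nestw v lam vN N S.
Proof.
move=> NP; rewrite /nestw; case: ifP => [/eqP l0|_]; last exact: powR_ge0.
by case: ifP => // _; apply: ltW; apply: vNpos.
Qed.

Lemma denom_gt0 S : 0 < denom P v lam vN S.
Proof.
rewrite /denom; have : 0 <= \sum_(N in P) nestw v lam vN N S.
  by apply: sumr_ge0 => N NP; apply: nestw_ge0.
lra.
Qed.

Lemma BF0_gt0 S : 0 < BF0 P v lam vN S.
Proof.
rewrite /BF0 /phi0; have := denom_gt0 S; have := denom_gt0 [set: 'I_n].
move=> h1 h2; apply: divr_gt0; apply: divr_gt0 => //.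
Qed.

Lemma BF_formula (S : {set 'I_n}) i : i \in S ->
  BF P v lam vN i S = BF0 P v lam vN S * Mult v lam (pblock P i) S.
Proof.
move=> iS.
set N := pblock P i.
have iN : i \in N := mem_self' i.
have W0 : 0 < wsum v N := wsum_gt0 iN.
have Ws0 : 0 < wsum v (N :&: S) by apply: (@wsum_gt0 _ i); rewrite inE iN.
have D0 := denom_gt0 S; have D1 := denom_gt0 [set: 'I_n].
have vi := vpos i.
rewrite /BF /BF0 /phi /phi0 /Mult /nest -/N setIT.
rewrite /nestw setIT.
have NS0 : N :&: S != set0 by apply/set0Pn; exists i; rewrite inE iN.
have N0 : N != set0 by apply/set0Pn; exists i.
rewrite NS0 N0.
case: ifP => [/eqP l0 | /negbT l0].
  have vN0 := vNpos (pbP i) l0.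
  rewrite l0 subr0 powRr1; last by apply: divr_ge0; apply: ltW.
  field; rewrite ?gt_eqF //.
have Ww : wsum v N / wsum v (N :&: S) != 0 by rewrite gt_eqF // divr_gt0.
rewrite powRB; last by rewrite Ww implybT.
rewrite powRr1; last by apply: divr_ge0; apply: ltW.
rewrite powRM; [|by apply: ltW| by rewrite invr_ge0; apply: ltW].
have Hinv : (wsum v (N :&: S))^-1 `^ lam N = (wsum v (N :&: S) `^ lam N)^-1.
  have := @powRM _ (wsum v (N :&: S)) ((wsum v (N :&: S))^-1) (lam N).
  rewrite divff ?gt_eqF // powR1 => /(_ (ltW Ws0)).
  rewrite invr_ge0 (ltW Ws0) => /(_ isT) H.
  have p0 : 0 < wsum v (N :&: S) `^ lam N by apply: powR_gt0.
  apply: (@mulfI _ (wsum v (N :&: S) `^ lam N)); first by rewrite gt_eqF.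
  by rewrite -H divff // gt_eqF.
rewrite Hinv.
have p1 : 0 < wsum v (N :&: S) `^ lam N by apply: powR_gt0.
have p2 : 0 < wsum v N `^ lam N by apply: powR_gt0.
field; rewrite ?gt_eqF //.
Qed.

Lemma Mult1 i (S : {set 'I_n}) : pblock P i \subset S -> Mult v lam (pblock P i) S = 1.
Proof.
move=> sub; rewrite /Mult (setIidPl sub) divff; first by rewrite powR1.
by rewrite gt_eqF // (wsum_gt0 (mem_self' i)).
Qed.

Lemma Mult_gt1 i (S : {set 'I_n}) : i \in S -> ~~ (pblock P i \subset S) ->
  1 < Mult v lam (pblock P i) S.
Proof.
move=> iS /subsetPn [x xN xS].
set N := pblock P i.
have iN : i \in N := mem_self' i.
have Ws0 : 0 < wsum v (N :&: S) by apply: (@wsum_gt0 _ i); rewrite inE iN.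
have Wd : 0 < wsum v (N :\: S) by apply: (@wsum_gt0 _ x); rewrite inE xN xS.
have WE : wsum v N = wsum v (N :&: S) + wsum v (N :\: S) by rewrite /wsum (big_setID S).
have lt1 : 1 < wsum v N / wsum v (N :&: S).
  by rewrite ltr_pdivlMr // mul1r WE; lra.
have lam1 : lam N < 1.
  have [l0 l1] := andP (lamr (pbP i)).
  rewrite lt_neqAle l1 andbT; apply/eqP => /(A1 (pbP i)) c1.
  have : (1 < #|N|)%N.
    apply/card_gt1P; exists i, x; split => //.
    by apply: contraNneq xS => <-.
  by rewrite c1.
rewrite /Mult -/N /powR ifF; last by apply/negbTE; rewrite gt_eqF // (lt_trans ltr01).
rewrite expR_gt1; apply: mulr_gt0; first by lra.
exact: ln_gt0.
Qed.

Lemma H1' (S : {set 'I_n}) i : i \in S ->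
  ((BF P v lam vN i S == BF0 P v lam vN S) = (pblock P i \subset S)) /\
  ((BF0 P v lam vN S < BF P v lam vN i S) = ~~ (pblock P i \subset S)).
Proof.
move=> iS; rewrite BF_formula //.
have B0 := BF0_gt0 S.
case: (boolP (pblock P i \subset S)) => sub.
  by rewrite Mult1 // mulr1 eqxx ltxx.
have M1 := Mult_gt1 iS sub.
have lt : BF0 P v lam vN S < BF0 P v lam vN S * Mult v lam (pblock P i) S.
  by rewrite -{1}[BF0 P v lam vN S]mulr1 ltr_pM2l.
by rewrite gt_eqF.
Qed.

Lemma H2' (S : {set 'I_n}) i j :
  (forall N N', N \in P -> N' \in P -> N != N' ->
     N :&: S != set0 -> N :&: S != N -> N' :&: S != set0 -> N' :&: S != N' ->
     Mult v lam N S != Mult v lam N' S) ->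
  i \in S -> j \in S ->
  (BF P v lam vN i S == BF P v lam vN j S) =
  (pblock P i == pblock P j) || ((pblock P i \subset S) && (pblock P j \subset S)).
Proof.
move=> A2 iS jS; rewrite !BF_formula //.
rewrite (inj_eq (mulfI (lt0r_neq0 (BF0_gt0 S)))).
case: (eqVneq (pblock P i) (pblock P j)) => [-> | nij]; first by rewrite eqxx.
rewrite /=.
have ne0 k : k \in S -> pblock P k :&: S != set0.
  by move=> kS; apply/set0Pn; exists k; rewrite inE mem_self' kS.
have neN k : ~~ (pblock P k \subset S) -> pblock P k :&: S != pblock P k.
  by move=> nk; apply: contra nk => /eqP /setIidPl.
case: (boolP (pblock P i \subset S)) => si; case: (boolP (pblock P j \subset S)) => sj /=.
- by rewrite !Mult1 // eqxx.
- by rewrite (Mult1 si) lt_eqF // Mult_gt1.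
- by rewrite (Mult1 sj) gt_eqF // Mult_gt1.
- apply/negbTE; apply: A2 => //; try exact: pbP; try exact: ne0; exact: neN.
Qed.
End NLp.

Theorem theorem4p5 (R : realType) (n b : nat)
  (sigma : 'I_n -> {ffun 'I_(up_log b n) -> 'I_b})
  (P : {set {set 'I_n}}) (v : 'I_n -> R) (lam vN : {set 'I_n} -> R)
  (s : seq {set 'I_n}) :
  (2 <= n)%N -> (2 <= b)%N -> injective sigma ->
  partition P [set: 'I_n] ->
  (forall i, 0 < v i) ->
  (forall N, N \in P -> 0 <= lam N <= 1) ->
  (forall N, N \in P -> lam N = 0 -> 0 < vN N) ->
  (* Assumption 1 *)
  (forall N, N \in P -> (lam N = 1 <-> #|N| = 1%N)) ->
  (* Assumption 2 *)
  (forall S N N', S \in Sfam sigma -> N \in P -> N' \in P -> N != N' ->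
     N :&: S != set0 -> N :&: S != N -> N' :&: S != set0 -> N' :&: S != N' ->
     Mult v lam N S != Mult v lam N' S) ->
  (* s enumerates the family Sfam, in an arbitrary order *)
  uniq s -> (forall S, (S \in s) = (S \in Sfam sigma)) ->
  forall i j : 'I_n, i != j ->
    algorithm1 (BF P v lam vN) (BF0 P v lam vN) s i j = (pblock P i == pblock P j).
Proof.
move=> n2 b2 sinj Hpart vpos lamr vNpos A1 A2 us Hs i j ij.
rewrite /algorithm1.
apply: (main sinj Hpart Hs _ _ ij).
- move=> S k HS kS; exact: (H1' Hpart vpos lamr vNpos A1).
- move=> S k l HS kS lS; apply: (H2' Hpart vpos lamr vNpos A1) => //.
  by move=> N N'; apply: A2.
Qed.
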